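(* Let $f:\mathbb{R}^n\to\mathbb{R}$ be bounded below by $f_{\mathrm{low}}$ and twice continuously differentiable with $\nabla^2 f$ Lipschitz continuous with constant $L_{\nabla^2 f}$. Run the algorithm described in the context, and suppose that (i) at every iteration $k$ the model $m_k$ is fully quadratic in $B(x_k,\Delta_k)$ with constants $\kappa_{\mathrm{mf}},\kappa_{\mathrm{mg}},\kappa_{\mathrm{mh}}>0$ independent of $k$, and $\|H_k\|\le\kappa_H-1$ for some $\kappa_H\ge1$ independent of $k$; (ii) at every iteration the step satisfies $\|s_k\|\le\Delta_k$ and $$m_k(x_k)-m_k(x_k+s_k)\ge\kappa_s\max\left(\|g_k\|\min\left(\Delta_k,\frac{\|g_k\|}{\|H_k\|+1}\right),\ \tau^m_k\Delta_k^2\right)$$ for some $\kappa_s\in(0,\tfrac12)$. Let $\epsilon>0$. If $\sigma_k\ge\epsilon$ for all $k=0,\ldots,K-1$, then $$K\le\frac{\log(\Delta_0/\Delta_{\min}(\epsilon))}{\log(\gamma_{\mathrm{dec}}^{-1})}+\left(1+\frac{\log(\gamma_{\mathrm{inc}})}{\log(\gamma_{\mathrm{dec}}^{-1})}\right)\frac{(1+\kappa_\sigma\mu_c^{-1})[f(x_0)-f_{\mathrm{low}}]}{\eta_U\kappa_s\min(\epsilon\Delta_{\min}(\epsilon),\epsilon\Delta_{\min}(\epsilon)^2)},$$ where $\kappa_\sigma:=\max(\kappa_{\mathrm{mg}}\Delta_{\max},\kappa_{\mathrm{mh}})$ and $$\Delta_{\min}(\epsilon):=\min\left(\Delta_0,\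 \frac{\gamma_{\mathrm{dec}}\epsilon}{\max\left(\frac{2\kappa_{\mathrm{mf}}\Delta_{\max}}{\kappa_s(1-\eta_S)},\kappa_H,\mu_c\right)+\kappa_\sigma},\ \frac{\gamma_{\mathrm{dec}}\epsilon}{\max\left(\frac{2\kappa_{\mathrm{mf}}}{\kappa_s(1-\eta_S)},\mu_c\right)+\kappa_\sigma},\ \frac{\epsilon}{(1+\kappa_\sigma\mu_c^{-1})\kappa_H}\right).$$
   Context: Norms are Euclidean (operator 2-norm for matrices); $B(x,\Delta)=\{y:\|y-x\|\le\Delta\}$. A model $m$ is fully quadratic in $B(x,\Delta)$ with constants $\kappa_{\mathrm{mf}},\kappa_{\mathrm{mg}},\kappa_{\mathrm{mh}}>0$ if for all $y\in B(x,\Delta)$: $|m(y)-f(y)|\le\kappa_{\mathrm{mf}}\Delta^3$, $\|\nabla m(y)-\nabla f(y)\|\le\kappa_{\mathrm{mg}}\Delta^2$, $\|\nabla^2 m(y)-\nabla^2 f(y)\|\le\kappa_{\mathrm{mh}}\Delta$. Notation: $\tau_k:=\max(-\lambda_{\min}(\nabla^2 f(x_k)),0)$, $\sigma_k:=\max(\|\nabla f(x_k)\|,\tau_k)$, $\tau^m_k:=\max(-\lambda_{\min}(H_k),0)$, $\sigma^m_k:=\max(\|g_k\|,\tau^m_k)$. Algorithm: inputs $x_0\in\mathbb{R}^n$, $\Delta_0>0$, parameters $\Delta_{\max}\ge\Delta_0$, $0<\gamma_{\mathrm{dec}}<1<\gamma_{\mathrm{inc}}$, $0<\eta_U\le\eta_S<1$,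 $\mu_c>0$. For $k=0,1,\ldots$: build a quadratic model $m_k(y)=c_k+g_k^T(y-x_k)+\tfrac12(y-x_k)^TH_k(y-x_k)$ ($H_k$ symmetric); compute a step $s_k$; evaluate $f(x_k+s_k)$ and $\rho_k=\frac{f(x_k)-f(x_k+s_k)}{m_k(x_k)-m_k(x_k+s_k)}$. If $\rho_k\ge\eta_S$ and $\sigma^m_k\ge\mu_c\Delta_k$: $x_{k+1}=x_k+s_k$, $\Delta_{k+1}=\min(\gamma_{\mathrm{inc}}\Delta_k,\Delta_{\max})$. Else if $\eta_U\le\rho_k<\eta_S$ and $\sigma^m_k\ge\mu_c\Delta_k$: $x_{k+1}=x_k+s_k$, $\Delta_{k+1}=\Delta_k$. Otherwise: $x_{k+1}=x_k$, $\Delta_{k+1}=\gamma_{\mathrm{dec}}\Delta_k$. *)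

(* Defs.v *)
From HB Require Import structures.
From mathcomp Require Import all_boot all_order all_algebra.
From mathcomp Require Import all_classical all_reals all_analysis.
Set Implicit Arguments. Unset Strict Implicit. Unset Printing Implicit Defensive.
Import Order.TTheory GRing.Theory Num.Theory.
Import numFieldNormedType.Exports.
Local Open Scope classical_set_scope.
Local Open Scope ring_scope.

Section Defs.
Variables (R : realType) (n : nat).

Definition enorm (v : 'cV[R]_n) : R := Num.sqrt (\sum_(i < n) (v i 0) ^+ 2).

Definition opnorm (A : 'M[R]_n) : R :=
  sup [set r : R | exists v : 'cV[R]_n, enorm v <= 1 /\ r = enorm (A *m v)].

Definition lambda_min (A : 'M[R]_n) : R := inf [set a : R | eigenvalue A a].

Definition ecoord (i : 'I_n) : 'cV[R]_n := delta_mx i 0.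

Definition grad (f : 'cV[R]_n -> R) (x : 'cV[R]_n) : 'cV[R]_n :=
  \col_i ('D_(ecoord i) f x).

Definition hess (f : 'cV[R]_n -> R) (x : 'cV[R]_n) : 'M[R]_n :=
  \matrix_(i, j) ('D_(ecoord j) (fun y => 'D_(ecoord i) f y) x).

Definition C2 (f : 'cV[R]_n -> R) : Prop :=
  (forall x, differentiable f x) /\
  (forall i x, differentiable (fun y => 'D_(ecoord i) f y) x) /\
  (forall i j, continuous (fun y => 'D_(ecoord j) (fun z => 'D_(ecoord i) f z) y)).

Definition hess_lipschitz (f : 'cV[R]_n -> R) (L : R) : Prop :=
  forall x y, opnorm (hess f x - hess f y) <= L * enorm (x - y).

Definition qmodel (c : R) (g : 'cV[R]_n) (H : 'M[R]_n) (x y : 'cV[R]_n) : R :=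
  c + (g^T *m (y - x)) 0 0 + 2^-1 * (((y - x)^T *m H *m (y - x)) 0 0).

Definition qmodel_grad (g : 'cV[R]_n) (H : 'M[R]_n) (x y : 'cV[R]_n) : 'cV[R]_n :=
  g + H *m (y - x).

Definition fully_quadratic (f : 'cV[R]_n -> R) (c : R) (g : 'cV[R]_n) (H : 'M[R]_n)
  (x : 'cV[R]_n) (Delta kmf kmg kmh : R) : Prop :=
  forall y, enorm (y - x) <= Delta ->
    `|qmodel c g H x y - f y| <= kmf * Delta ^+ 3 /\
    enorm (qmodel_grad g H x y - grad f y) <= kmg * Delta ^+ 2 /\
    opnorm (H - hess f y) <= kmh * Delta.

Definition tau_of (A : 'M[R]_n) : R := Num.max (- lambda_min A) 0.

Definition sigma_of (g : 'cV[R]_n) (A : 'M[R]_n) : R := Num.max (enorm g) (tau_of A).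

End Defs.

Definition kappa_sigma (R : realType) (kmg Dmax kmh : R) : R := Num.max (kmg * Dmax) kmh.

Definition Delta_min (R : realType) (eps D0 Dmax gdec etaS mu_c kmf kmg kmh ks kH : R) : R :=
  let ksig := kappa_sigma kmg Dmax kmh in
  Num.min (Num.min D0
    (gdec * eps / (Num.max (Num.max (2 * kmf * Dmax / (ks * (1 - etaS))) kH) mu_c + ksig)))
   (Num.min
    (gdec * eps / (Num.max (2 * kmf / (ks * (1 - etaS))) mu_c + ksig))
    (eps / ((1 + ksig * mu_c^-1) * kH))).

(* Main.v *)
Require Import Defs.
From HB Require Import structures.
From mathcomp Require Import all_boot all_order all_algebra.
From mathcomp Require Import all_classical all_reals all_analysis.
From mathcomp Require Import ring lra.
Import Order.TTheory GRing.Theory Num.Theory.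
Import numFieldNormedType.Exports.
Local Open Scope classical_set_scope.
Local Open Scope ring_scope.

Lemma maxP {R : realDomainType} (x y : R) :
  x <= Num.max x y /\ y <= Num.max x y /\ (Num.max x y = x \/ Num.max x y = y).
Proof. rewrite !le_max !lexx orbT /=; split => //; rewrite maxEle; case: ifP; auto. Qed.

Lemma minP {R : realDomainType} (x y : R) :
  Num.min x y <= x /\ Num.min x y <= y /\ (Num.min x y = x \/ Num.min x y = y).
Proof. rewrite !ge_min !lexx orbT /=; split => //; rewrite minEle; case: ifP; auto. Qed.

Section LA.
Variables (R : realType) (n : nat).
Implicit Types (u v w : 'cV[R]_n) (A B M : 'M[R]_n).

Definition dot u v : R := \sum_(i < n) u i 0 * v i 0.

Lemma dotE u v : dot u v = (u^T *m v) 0 0.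
Proof. by rewrite /dot mxE; apply: eq_bigr => i _; rewrite mxE. Qed.

Lemma dotC u v : dot u v = dot v u.
Proof. by apply: eq_bigr => i _; rewrite mulrC. Qed.

Lemma dotDl u v w : dot (u + v) w = dot u w + dot v w.
Proof. rewrite /dot -big_split; apply: eq_bigr => i _; by rewrite mxE mulrDl. Qed.

Lemma dotDr u v w : dot w (u + v) = dot w u + dot w v.
Proof. by rewrite dotC dotDl !(dotC w). Qed.

Lemma dotZl a u v : dot (a *: u) v = a * dot u v.
Proof. by rewrite /dot mulr_sumr; apply: eq_bigr => i _; rewrite mxE mulrA. Qed.

Lemma dotZr a u v : dot v (a *: u) = a * dot v u.
Proof. by rewrite dotC dotZl dotC. Qed.

Lemma dotNl u v : dot (- u) v = - dot u v.
Proof. by rewrite -scaleN1r dotZl mulN1r. Qed.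

Lemma dotNr u v : dot v (- u) = - dot v u.
Proof. by rewrite dotC dotNl dotC. Qed.

Lemma dot_ge0 u : 0 <= dot u u.
Proof. by apply: sumr_ge0 => i _; rewrite -expr2 sqr_ge0. Qed.

Lemma dot_eq0 u : dot u u = 0 -> u = 0.
Proof.
move=> /eqP; rewrite psumr_eq0; last by move=> i _; rewrite -expr2 sqr_ge0.
move=> /allP H; apply/matrixP => i j; rewrite (ord1 j) mxE.
have := H i (mem_index_enum i); rewrite /= -expr2 sqrf_eq0 => /eqP //.
Qed.

Lemma enormE u : enorm u = Num.sqrt (dot u u).
Proof. by rewrite /enorm /dot; congr Num.sqrt; apply: eq_bigr => i _; rewrite expr2. Qed.

Lemma enorm_ge0 u : 0 <= enorm u.
Proof. by rewrite /enorm sqrtr_ge0. Qed.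

Lemma enorm_sq u : enorm u ^+ 2 = dot u u.
Proof. by rewrite enormE sqr_sqrtr // dot_ge0. Qed.

Lemma enorm_gt0 u : u != 0 -> 0 < enorm u.
Proof.
move=> nz; rewrite enormE sqrtr_gt0 lt_def dot_ge0 andbT.
by apply/eqP => /dot_eq0 h; move: nz; rewrite h eqxx.
Qed.

Lemma enorm0 : enorm (0 : 'cV[R]_n) = 0.
Proof. by rewrite enormE /dot big1 ?sqrtr0 // => i _; rewrite mxE mul0r. Qed.

Lemma enormZ a u : enorm (a *: u) = `|a| * enorm u.
Proof.
rewrite !enormE dotZl dotZr mulrA sqrtrM; last by rewrite -expr2 sqr_ge0.
by rewrite -expr2 sqrtr_sqr.
Qed.

Lemma enormN u : enorm (- u) = enorm u.
Proof. by rewrite -scaleN1r enormZ normrN normr1 mul1r. Qed.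

Lemma discr (a b c : R) : 0 <= c -> (forall t, 0 <= a + 2 * t * b + t ^+ 2 * c) ->
  b ^+ 2 <= a * c.
Proof.
move=> c0 H.
have a0 : 0 <= a by have := H 0; rewrite !(mul0r, mulr0, expr0n, addr0) /=.
have [c0'|cp] : c = 0 \/ 0 < c.
  by move: c0; rewrite le_eqVlt => /orP[/eqP<-|]; auto.
  rewrite c0' mulr0.
  case: (eqVneq b 0) => [->|bn]; first by rewrite expr0n.
  have := H (- (a + 1) / (2 * b)); rewrite c0' mulr0 addr0.
  have -> : 2 * (- (a + 1) / (2 * b)) * b = - (a + 1) by field.
  lra.
have := H (- b / c).
have -> : a + 2 * (- b / c) * b + (- b / c) ^+ 2 * c = a - b ^+ 2 / c.
  by field; rewrite gt_eqF.
rewrite subr_ge0 ler_pdivrMr //.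
Qed.

Lemma dot_exp u v t : dot (u + t *: v) (u + t *: v) = dot u u + 2 * t * dot u v + t ^+ 2 * dot v v.
Proof. rewrite !dotDl !dotDr !dotZl !dotZr (dotC v u); ring. Qed.

Lemma CS u v : dot u v ^+ 2 <= dot u u * dot v v.
Proof.
apply: discr; first exact: dot_ge0.
by move=> t; rewrite -dot_exp dot_ge0.
Qed.

Lemma CS_abs u v : `|dot u v| <= enorm u * enorm v.
Proof.
rewrite -(ler_pXn2r (n:=2)) // ?nnegrE ?mulr_ge0 ?enorm_ge0 //.
by rewrite real_normK ?num_real // exprMn !enorm_sq CS.
Qed.

Lemma sqrt_le (x y : R) : 0 <= y -> x <= y ^+ 2 -> Num.sqrt x <= y.
Proof.
move=> y0 h; case: (lerP 0 x) => x0.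
  by rewrite -(ger0_norm y0) -sqrtr_sqr ler_sqrt // sqr_ge0.
by rewrite ltr0_sqrtr.
Qed.

Lemma enormD u v : enorm (u + v) <= enorm u + enorm v.
Proof.
rewrite {1}enormE; apply: sqrt_le; first by rewrite addr_ge0 ?enorm_ge0.
rewrite dotDl !dotDr (dotC v u) sqrrD -!enorm_sq.
have := CS_abs u v; have := ler_norm (dot u v); lra.
Qed.

Lemma enormB u v : enorm (u - v) <= enorm u + enorm v.
Proof. by rewrite -(enormN v) enormD. Qed.


Lemma mv_bound A v : dot (A *m v) (A *m v) <= (\sum_(i < n) dot (row i A)^T (row i A)^T) * dot v v.
Proof.
rewrite {1}/dot mulr_suml; apply: ler_sum => i _.
have -> : (A *m v) i 0 = dot (row i A)^T v.
  by rewrite mxE; apply: eq_bigr => j _; rewrite !mxE.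
by rewrite -expr2 CS.
Qed.

Definition opset A := [set r : R | exists v : 'cV[R]_n, enorm v <= 1 /\ r = enorm (A *m v)].

Lemma opset_ub A : has_ubound (opset A).
Proof.
set C := \sum_(i < n) dot (row i A)^T (row i A)^T.
have C0 : 0 <= C by apply: sumr_ge0 => i _; apply: dot_ge0.
exists (Num.sqrt C) => r [v [v1 ->]].
rewrite enormE; apply: sqrt_le; first exact: sqrtr_ge0.
apply: (le_trans (mv_bound A v)).
rewrite sqr_sqrtr // -enorm_sq.
have e1 : enorm v ^+ 2 <= 1 by have := enorm_ge0 v; nra.
by rewrite ler_piMr.
Qed.

Lemma opset_ne A : opset A 0.
Proof. by exists 0; rewrite mulmx0 enorm0. Qed.

Lemma op_ge0 A : 0 <= opnorm A.
Proof. exact: (ub_le_sup (opset_ub A) (opset_ne A)). Qed.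

Lemma op_le A v : enorm (A *m v) <= opnorm A * enorm v.
Proof.
case: (eqVneq v 0) => [->|nz]; first by rewrite mulmx0 enorm0 mulr0.
have e0 := enorm_gt0 v nz.
have : opset A (enorm (A *m ((enorm v)^-1 *: v))).
  exists ((enorm v)^-1 *: v); split => //.
  by rewrite enormZ ger0_norm ?invr_ge0 ?enorm_ge0 // mulVf ?gt_eqF.
move=> /(ub_le_sup (opset_ub A)).
rewrite -scalemxAr enormZ ger0_norm ?invr_ge0 ?enorm_ge0 //.
by rewrite mulrC -ler_pdivrMr ?invr_gt0 // invrK.
Qed.

Lemma qf_abs A u : `|dot u (A *m u)| <= opnorm A * dot u u.
Proof.
apply: (le_trans (CS_abs _ _)).
rewrite -enorm_sq expr2 mulrCA; apply: ler_wpM2l; first exact: enorm_ge0.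
exact: op_le.
Qed.

Lemma dot_mx A u v : dot u (A *m v) = dot (A^T *m u) v.
Proof. by rewrite !dotE trmx_mul trmxK mulmxA. Qed.

Lemma dot_sym M u v : M^T = M -> dot u (M *m v) = dot v (M *m u).
Proof. by move=> hM; rewrite dot_mx hM dotC. Qed.


Lemma dot0l v : dot 0 v = 0.
Proof. by rewrite /dot big1 // => i _; rewrite mxE mul0r. Qed.

Lemma eig_col B b : eigenvalue B b ->
  exists2 u : 'cV[R]_n, u != 0 & dot u (B *m u) = b * dot u u.
Proof.
move=> /eigenvalueP [w hw nz]; exists w^T; first by rewrite trmx_eq0.
by rewrite !dotE trmxK mulmxA hw -scalemxAl mxE.
Qed.

Lemma eig_lb A a : eigenvalue A a -> - opnorm A <= a.
Proof.
move=> /eig_col [u nz hu].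
have N0 : 0 < dot u u by rewrite -enorm_sq exprn_gt0 // enorm_gt0.
have := qf_abs A u; rewrite hu => h.
have h2 := ler_normr (a * dot u u); have h3 := ler_norm (a * dot u u).
rewrite -(ler_pM2r N0) mulNr; move: h; rewrite ler_norml => /andP[h _] //.
Qed.

Lemma lmin_le A a : eigenvalue A a -> lambda_min A <= a.
Proof.
move=> ev; apply: ge_inf => //; exists (- opnorm A) => r; exact: eig_lb.
Qed.

Lemma spectral H u : H^T = H -> u != 0 ->
  exists2 a, eigenvalue H a & a * dot u u <= dot u (H *m u).
Proof.
move=> hH unz.
have Npos v : v != 0 -> 0 < dot v v by move=> vnz; rewrite -enorm_sq exprn_gt0 // enorm_gt0.
pose S := [set r : R | exists2 v : 'cV[R]_n, v != 0 & r = dot v (H *m v) / dot v v].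
have Slb : has_lbound S.
  exists (- opnorm H) => r [v vnz ->].
  rewrite ler_pdivlMr ?Npos // mulNr.
  by have := qf_abs H v; rewrite ler_norml => /andP[].
pose mu := inf S.
have hmu v : v != 0 -> mu * dot v v <= dot v (H *m v).
  move=> vnz; rewrite -ler_pdivlMr ?Npos //; apply: ge_inf => //; by exists v.
case: (boolP (eigenvalue H mu)) => [ev|nev]; first by exists mu => //; apply: hmu.
exfalso.
pose M := H - mu%:M.
have Mu : M \in unitmx.
  by move: nev; rewrite /eigenvalue /eigenspace negbK kermx_eq0 row_free_unit.
have Msym : M^T = M by rewrite /M linearB /= tr_scalar_mx hH.
have Mv v : dot v (M *m v) = dot v (H *m v) - mu * dot v v.
  by rewrite /M mulmxBl mul_scalar_mx -[_ - _]/(_ + - _) dotDr dotNr dotZr.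
have psd v : 0 <= dot v (M *m v).
  case: (eqVneq v 0) => [->|vnz]; first by rewrite dot0l.
  by rewrite Mv subr_ge0 hmu.
have CSM x y : dot x (M *m y) ^+ 2 <= dot x (M *m x) * dot y (M *m y).
  apply: discr; first exact: psd.
  move=> t; have := psd (x + t *: y).
  rewrite mulmxDr -scalemxAr !dotDl !dotDr !dotZl !dotZr (dot_sym M y x Msym).
  suff -> : dot x (M *m x) + 2 * t * dot x (M *m y) + t ^+ 2 * dot y (M *m y) =
    dot x (M *m x) + t * dot x (M *m y) + (t * dot x (M *m y) + t * (t * dot y (M *m y))) by [].
  ring.
have key x : dot (M *m x) (M *m x) <= opnorm M * dot x (M *m x).
  have := CSM x (M *m x); rewrite (dot_sym M x (M *m x) Msym).
  set N := dot (M *m x) (M *m x); set q := dot x (M *m x).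
  have hq : 0 <= q := psd x.
  have hN : 0 <= N := dot_ge0 _.
  have h2 : dot (M *m x) (M *m (M *m x)) <= opnorm M * N.
    by have := qf_abs M (M *m x); rewrite ler_norml => /andP[].
  have hop := op_ge0 M.
  move=> h1.
  have h3 : N ^+ 2 <= q * (opnorm M * N).
    by apply: (le_trans h1); apply: ler_wpM2l.
  case: (eqVneq N 0) => [->|Nn0]; first by rewrite mulr_ge0.
  have Np : 0 < N by rewrite lt_def Nn0 hN.
  nra.
have inv x : enorm x <= opnorm (invmx M) * enorm (M *m x).
  by rewrite -{1}(mulKmx Mu x); apply: op_le.
pose D := opnorm (invmx M) ^+ 2 * opnorm M.
have D0 : 0 <= D by rewrite mulr_ge0 ?op_ge0 // sqr_ge0.
have hD x : dot x x <= D * dot x (M *m x).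
  have h1 : dot x x <= opnorm (invmx M) ^+ 2 * dot (M *m x) (M *m x).
    rewrite -!enorm_sq -exprMn ler_pXn2r // ?nnegrE ?mulr_ge0 ?op_ge0 ?enorm_ge0 //.
  apply: (le_trans h1); rewrite /D -mulrA; apply: ler_wpM2l; first exact: sqr_ge0.
  exact: key.
have D1 : 0 < D + 1 by lra.
have lb : lbound S (mu + (D + 1)^-1).
  move=> r [v vnz ->].
  rewrite ler_pdivlMr ?Npos // mulrDl.
  have h : (D + 1)^-1 * dot v v <= dot v (M *m v).
    rewrite mulrC ler_pdivrMr //. have := hD v; have := psd v; nra.
  have := Mv v; lra.
have := lb_le_inf (ex_intro _ _ (ex_intro2 _ _ u unz erefl) : S !=set0) lb.
rewrite -/mu; have : 0 < (D + 1)^-1 by rewrite invr_gt0.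
lra.
Qed.


Lemma weyl H B b : H^T = H -> eigenvalue B b -> lambda_min H <= b + opnorm (H - B).
Proof.
move=> hH /eig_col [u unz hu].
have N0 : 0 < dot u u by rewrite -enorm_sq exprn_gt0 // enorm_gt0.
have [a ev ha] := spectral H u hH unz.
have la := lmin_le H a ev.
have e : dot u (H *m u) = dot u (B *m u) + dot u ((H - B) *m u).
  by rewrite mulmxBl -[_ - _]/(_ + - _) dotDr dotNr addrCA subrr addr0.
have h2 : dot u ((H - B) *m u) <= opnorm (H - B) * dot u u.
  by have := qf_abs (H - B) u; rewrite ler_norml => /andP[].
have : lambda_min H * dot u u <= (b + opnorm (H - B)) * dot u u.
  have := ler_wpM2r (ltW N0) la; rewrite mulrDl; lra.
by rewrite ler_pM2r.
Qed.

Lemma tau_ge0 A : 0 <= tau_of A.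
Proof. by rewrite /tau_of le_max lexx orbT. Qed.

Lemma tau_le H B : H^T = H -> tau_of B <= tau_of H + opnorm (H - B).
Proof.
move=> hH.
have hop := op_ge0 (H - B).
have [t1 [t2 _]] := maxP (- lambda_min H) 0.
rewrite /tau_of ge_max; apply/andP; split; last by lra.
case: (pselect (exists b, eigenvalue B b)) => [[b0 hb0]|nb].
  have : lambda_min H - opnorm (H - B) <= lambda_min B.
    apply: lb_le_inf; first by exists b0.
    move=> b /= hb; have := weyl H B b hH hb; lra.
  lra.
have -> : lambda_min B = 0.
  rewrite /lambda_min (_ : [set a | eigenvalue B a] = set0) ?inf0 //.
  by apply/seteqP; split => a //= ev; apply: nb; exists a.
lra.
Qed.

Lemma enorm_diff u v : enorm u <= enorm v + enorm (v - u).
Proof.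
have := enormB v (v - u); rewrite opprB addrC subrK.
by [].
Qed.

Lemma sigma_le g H gf B d1 d2 : H^T = H -> enorm (g - gf) <= d1 ->
  opnorm (H - B) <= d2 -> sigma_of gf B <= sigma_of g H + Num.max d1 d2.
Proof.
move=> hH h1 h2.
have e1 := enorm_diff gf g.
have e2 := tau_le H B hH.
have [m1 [m2 _]] := maxP (enorm g) (tau_of H).
have [m3 [m4 _]] := maxP d1 d2.
have e3 := e2.
rewrite /sigma_of ge_max; apply/andP; split; lra.
Qed.

End LA.

Section Helpers.
Variable R : realFieldType.
Lemma hl_div (a g d X e : R) : 0 < g -> a * g <= d -> 0 <= X -> d * X <= g * e -> a * X <= e.
Proof.
move=> g0 h1 X0 h2.
have h3 : a * g * X <= d * X by apply: ler_wpM2r.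
have : g * (a * X) <= g * e by lra.
by rewrite ler_pM2l.
Qed.
Lemma hl_mono (B A D G : R) : 0 <= D -> B <= A -> A * D <= G -> B * D <= G.
Proof. by move=> D0 h1; apply: le_trans; apply: ler_wpM2r. Qed.
Lemma hl_GD (D P kH A G : R) : 0 < D -> P + 1 <= kH -> kH <= A -> A * D <= G -> D * (P + 1) <= G.
Proof. move=> D0 h1 h2 h3; rewrite mulrC; apply: hl_mono h3 => //; [exact: ltW | lra]. Qed.
Lemma hl_pos (a b m : R) : 0 < a -> a <= b * m -> 0 < b -> 0 < m.
Proof. move=> a0 h b0; have : 0 < b * m by lra. by rewrite pmulr_rgt0. Qed.
End Helpers.
Arguments hl_div {R a g d X e}.
Arguments hl_mono {R B A D G}.
Arguments hl_GD {R D P kH A G}.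
Arguments hl_pos {R a b m}.
Lemma hl_scale {R : realFieldType} (a b c : R) : 0 < c -> a * c <= b * c -> a <= b.
Proof. by move=> c0; rewrite ler_pM2r. Qed.
Arguments hl_scale {R a b c}.

Local Close Scope classical_set_scope.

Theorem theorem4p15 (R : realType) (n : nat)
  (f : 'cV[R]_n -> R) (f_low L : R)
  (Dmax gdec ginc etaU etaS mu_c : R)
  (kmf kmg kmh kH ks eps : R)
  (x s : nat -> 'cV[R]_n) (Delta : nat -> R)
  (c : nat -> R) (g : nat -> 'cV[R]_n) (H : nat -> 'M[R]_n)
  (K : nat) :
  (* f bounded below, C^2 with Lipschitz Hessian *)
  (forall y, f_low <= f y) ->
  C2 f -> hess_lipschitz f L ->
  (* algorithm parameters *)
  0 < Delta 0%N -> Delta 0%N <= Dmax ->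
  0 < gdec -> gdec < 1 -> 1 < ginc ->
  0 < etaU -> etaU <= etaS -> etaS < 1 -> 0 < mu_c ->
  (* model constants *)
  0 < kmf -> 0 < kmg -> 0 < kmh -> 1 <= kH ->
  0 < ks -> ks < 2^-1 ->
  (* the models: symmetric, fully quadratic, bounded Hessian *)
  (forall k, (H k)^T = H k) ->
  (forall k, fully_quadratic f (c k) (g k) (H k) (x k) (Delta k) kmf kmg kmh) ->
  (forall k, opnorm (H k) <= kH - 1) ->
  (* the steps *)
  (forall k, enorm (s k) <= Delta k) ->
  (forall k, qmodel (c k) (g k) (H k) (x k) (x k)
               - qmodel (c k) (g k) (H k) (x k) (x k + s k)
             >= ks * Num.max (enorm (g k) * Num.min (Delta k) (enorm (g k) / (opnorm (H k) + 1)))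
                             (tau_of (H k) * Delta k ^+ 2)) ->
  (* the iteration *)
  (forall k,
     let rho := (f (x k) - f (x k + s k)) /
                (qmodel (c k) (g k) (H k) (x k) (x k)
                 - qmodel (c k) (g k) (H k) (x k) (x k + s k)) in
     let sm := sigma_of (g k) (H k) in
     if (etaS <= rho) && (mu_c * Delta k <= sm) then
       x k.+1 = x k + s k /\ Delta k.+1 = Num.min (ginc * Delta k) Dmax
     else if (etaU <= rho) && (rho < etaS) && (mu_c * Delta k <= sm) then
       x k.+1 = x k + s k /\ Delta k.+1 = Delta k
     else
       x k.+1 = x k /\ Delta k.+1 = gdec * Delta k) ->
  (* conclusion *)
  0 < eps ->
  (forall k, (k < K)%N -> eps <= sigma_of (grad f (x k)) (hess f (x k))) ->
  let ksig := kappa_sigma kmg Dmax kmh in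
  let Dm := Delta_min eps (Delta 0%N) Dmax gdec etaS mu_c kmf kmg kmh ks kH in
  K%:R <= ln (Delta 0%N / Dm) / ln (gdec^-1)
          + (1 + ln ginc / ln (gdec^-1))
            * ((1 + ksig * mu_c^-1) * (f (x 0%N) - f_low)
               / (etaU * ks * Num.min (eps * Dm) (eps * Dm ^+ 2))).

Proof.
move=> hlow hC2 hL hD0 hD0max hg0 hg1 hginc hU0 hUS hS1 hmu hkmf hkmg hkmh hkH
  hks0 hks1 hsym hfq hHb hs hdec hit heps hsig.
cbv zeta.
set ksig := kappa_sigma kmg Dmax kmh.
set Dm := Delta_min eps (Delta 0%N) Dmax gdec etaS mu_c kmf kmg kmh ks kH.
set mdec := fun k => qmodel (c k) (g k) (H k) (x k) (x k)
                 - qmodel (c k) (g k) (H k) (x k) (x k + s k).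
set rho := fun k => (f (x k) - f (x k + s k)) / mdec k.
set sm := fun k => sigma_of (g k) (H k).
have hit' k : if (etaS <= rho k) && (mu_c * Delta k <= sm k) then
       x k.+1 = x k + s k /\ Delta k.+1 = Num.min (ginc * Delta k) Dmax
     else if (etaU <= rho k) && (rho k < etaS) && (mu_c * Delta k <= sm k) then
       x k.+1 = x k + s k /\ Delta k.+1 = Delta k
     else
       x k.+1 = x k /\ Delta k.+1 = gdec * Delta k by exact: hit k.
clear hC2 hL.
have Dpos : forall k, 0 < Delta k /\ Delta k <= Dmax.
  elim=> [|k [h1 h2]]; first by split.
  have [m1 [m2 m3]] := minP (ginc * Delta k) Dmax.
  have := hit' k; case: ifP => _.
    case=> _ ->; split => //; case: m3 => ->; clear -h1 h2 hginc hD0 hD0max; nra.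
  by case: ifP => _ [_ ->]; split => //; clear -h1 h2 hg0 hg1; nra.
have step k : [/\ (etaS <= rho k) && (mu_c * Delta k <= sm k) ->
                    Delta k.+1 = Num.min (ginc * Delta k) Dmax,
   gdec * Delta k <= Delta k.+1 &
   (x k.+1 = x k + s k /\ etaU <= rho k /\ mu_c * Delta k <= sm k /\
      Delta k.+1 <= ginc * Delta k) \/ (x k.+1 = x k /\ Delta k.+1 = gdec * Delta k)].
  have [h1 h2] := Dpos k.
  have [m1 [m2 m3]] := minP (ginc * Delta k) Dmax.
  have := hit' k; case: ifP => [/andP[c1 c2] [-> ->]| nc1].
    split => //; first by case: m3 => ->; clear -h1 h2 hg0 hg1 hginc; nra.
    by left; do !split => //; clear -c1 hUS; lra.
  case: ifP => [/andP[/andP[c1 c2] c3] [-> ->] | _ [-> ->]]; split => //; try by rewrite nc1.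
  - clear -h1 hg1; nra.
  - by left; do !split => //; clear -h1 hginc; nra.
  - by right.
have mf k : `|qmodel (c k) (g k) (H k) (x k) (x k) - f (x k)| <= kmf * Delta k ^+ 3 /\
    `|qmodel (c k) (g k) (H k) (x k) (x k + s k) - f (x k + s k)| <= kmf * Delta k ^+ 3 /\
    enorm (g k - grad f (x k)) <= kmg * Delta k ^+ 2 /\
    opnorm (H k - hess f (x k)) <= kmh * Delta k.
  have [h1 h2] := Dpos k.
  have [a1 [a2 a3]] := hfq k (x k) (ltac:(by rewrite subrr enorm0 ltW)).
  have [b1 _] := hfq k (x k + s k) (ltac:(by rewrite (addrC (x k)) addrK hs)).
  by move: a2; rewrite /qmodel_grad subrr mulmx0 addr0.
have ksig0 : 0 < ksig.
  have [t1 [t2 _]] := maxP (kmg * Dmax) kmh; rewrite /ksig /kappa_sigma.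
  clear -t2 hkmh; lra.
have sig_le k : sigma_of (grad f (x k)) (hess f (x k)) <= sm k + ksig * Delta k.
  have [h1 h2] := Dpos k.
  have [_ [_ [e1 e2]]] := mf k.
  have := @sigma_le _ _ _ _ _ _ _ _ (hsym k) e1 e2.
  have [t1 [t2 _]] := maxP (kmg * Dmax) kmh.
  have [t3 [t4 t5]] := maxP (kmg * Delta k ^+ 2) (kmh * Delta k).
  rewrite /ksig /kappa_sigma.
  have i2 : kmg * Delta k ^+ 2 <= Num.max (kmg * Dmax) kmh * Delta k.
    have i1 : kmg * Delta k ^+ 2 <= kmg * Dmax * Delta k.
      have p : 0 < kmg * Delta k by rewrite mulr_gt0.
      rewrite expr2; clear -p h2; nra.
    clear -i1 t1 h1; nra.
  have i3 : kmh * Delta k <= Num.max (kmg * Dmax) kmh * Delta k by clear -t2 h1; nra.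
  rewrite /sm; case: t5 => -> h; clear -h i2 i3; lra.
set B1 := 2 * kmf * Dmax / (ks * (1 - etaS)).
set A1 := Num.max (Num.max B1 kH) mu_c.
set B2 := 2 * kmf / (ks * (1 - etaS)).
set A2 := Num.max B2 mu_c.
set C4 := (1 + ksig * mu_c^-1) * kH.
have Dmax0 : 0 < Dmax by clear -hD0 hD0max; lra.
have kS0 : 0 < ks * (1 - etaS) by rewrite mulr_gt0 // subr_gt0.
have hB1 : B1 * (ks * (1 - etaS)) = 2 * kmf * Dmax by rewrite /B1 divfK // gt_eqF.
have hB2 : B2 * (ks * (1 - etaS)) = 2 * kmf by rewrite /B2 divfK // gt_eqF.
have a11 : Num.max B1 kH <= A1 := (maxP _ _).1.
have a12 : mu_c <= A1 := (maxP _ _).2.1.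
have a13 : B1 <= Num.max B1 kH := (maxP _ _).1.
have a14 : kH <= Num.max B1 kH := (maxP _ _).2.1.
have a21 : B2 <= A2 := (maxP _ _).1.
have a22 : mu_c <= A2 := (maxP _ _).2.1.
have A1kH : kH <= A1 by apply: le_trans a11.
have A1B1 : B1 <= A1 by apply: le_trans a11.
clear a11 a13 a14.
have A1p : 0 < A1 + ksig by clear -A1kH hkH ksig0; lra.
have A2p : 0 < A2 + ksig by clear -a22 hmu ksig0; lra.
have ksm : 0 < ksig * mu_c^-1 by rewrite divr_gt0.
have C4p : 0 < C4 by rewrite /C4 mulr_gt0 //; clear -ksm hkH; lra.
have hDm : [/\ 0 < Dm, Dm <= Delta 0%N, Dm * (A1 + ksig) <= gdec * eps,
     Dm * (A2 + ksig) <= gdec * eps & Dm * C4 <= eps].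
  have X1 : 0 < gdec * eps / (A1 + ksig) by rewrite divr_gt0 // mulr_gt0.
  have X2 : 0 < gdec * eps / (A2 + ksig) by rewrite divr_gt0 // mulr_gt0.
  have X4 : 0 < eps / C4 by rewrite divr_gt0.
  have e : Dm = Num.min (Num.min (Delta 0%N) (gdec * eps / (A1 + ksig)))
     (Num.min (gdec * eps / (A2 + ksig)) (eps / C4)) by [].
  have [m1 [m2 m3]] := minP (Num.min (Delta 0%N) (gdec * eps / (A1 + ksig)))
     (Num.min (gdec * eps / (A2 + ksig)) (eps / C4)).
  have [m4 [m5 m6]] := minP (Delta 0%N) (gdec * eps / (A1 + ksig)).
  have [m7 [m8 m9]] := minP (gdec * eps / (A2 + ksig)) (eps / C4).
  rewrite -!ler_pdivlMr // -e in m1 m2 m3 *.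
  split.
  - case: m3 => ->; [case: m6 => -> | case: m9 => ->] => //.
  - exact: le_trans m1 m4.
  - exact: le_trans m1 m5.
  - exact: le_trans m2 m7.
  - exact: le_trans m2 m8.
have [Dm0 DmD0 DmA1 DmA2 DmC4] := hDm.
clear hDm.
have model_dec k : mdec k >= ks * Num.max (enorm (g k) * Num.min (Delta k)
      (enorm (g k) / (opnorm (H k) + 1))) (tau_of (H k) * Delta k ^+ 2) := hdec k.
have S2 k : (k < K)%N -> Delta k * gdec <= Dm ->
    (etaS <= rho k) && (mu_c * Delta k <= sm k).
  move=> hk hDk.
  have [h1 h2] := Dpos k.
  have [q1 [q2 _]] := mf k.
  have sg := sig_le k; have e := hsig k hk.
  have d1 : Delta k * (A1 + ksig) <= eps by apply: hl_div hDk (ltW A1p) DmA1.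
  have d2 : Delta k * (A2 + ksig) <= eps by apply: hl_div hDk (ltW A2p) DmA2.
  have smA1 : A1 * Delta k <= sm k by clear -sg e d1; lra.
  have smA2 : A2 * Delta k <= sm k by clear -sg e d2; lra.
  have md := model_dec k.
  set G := enorm (g k) in md.
  set T := tau_of (H k) in md.
  set P := opnorm (H k) in md.
  have smE : sm k = Num.max G T by [].
  rewrite smE in smA1 smA2.
  have P0 : 0 <= P := @op_ge0 _ _ _.
  have P1 : P + 1 <= kH by have := hHb k; rewrite -/P; clear; lra.
  have [s1 [s2 s3]] := maxP G T.
  have G0 : 0 <= G := @enorm_ge0 _ _ _.
  have T0 : 0 <= T := @tau_ge0 _ _ _.
  have [M1 [M2 _]] := maxP (G * Num.min (Delta k) (G / (P + 1))) (T * Delta k ^+ 2).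
  have hS1' : 0 <= 1 - etaS by clear -hS1; lra.
  have key : 2 * kmf * Delta k ^+ 3 <= (1 - etaS) * mdec k.
    case: s3 => hsm.
    - have GA : A1 * Delta k <= G by rewrite -hsm.
      have GD : Delta k <= G / (P + 1).
        rewrite ler_pdivlMr; last by clear -P0; lra.
        exact: (hl_GD h1 P1 A1kH GA).
      have [n1 [n2 n3]] := minP (Delta k) (G / (P + 1)).
      have mn : Delta k <= Num.min (Delta k) (G / (P + 1)) by case: n3 => ->.
      have i1 : ks * (G * Delta k) <= mdec k.
        apply: le_trans md; apply: ler_wpM2l; first exact: ltW.
        apply: le_trans M1; apply: ler_wpM2l => //.
      have i2 : 2 * kmf * Dmax * Delta k <= ks * (1 - etaS) * G.
        have BG : B1 * Delta k <= G by apply: (hl_mono (ltW h1) A1B1 GA).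
        rewrite -hB1; have := ler_wpM2l (ltW kS0) BG; clear; lra.
      have i3 : 2 * kmf * Delta k ^+ 3 <= 2 * kmf * Dmax * Delta k ^+ 2.
        have p : 0 <= 2 * kmf * Delta k ^+ 2 by rewrite mulr_ge0 ?sqr_ge0 //; clear -hkmf; lra.
        rewrite exprSr mulrA [_ * Dmax * _]mulrAC; apply: ler_wpM2l => //.
      have i4 : 2 * kmf * Dmax * Delta k ^+ 2 <= (1 - etaS) * (ks * (G * Delta k)).
        have := ler_wpM2r (ltW h1) i2; rewrite expr2; clear; lra.
      apply: (le_trans i3); apply: (le_trans i4); exact: ler_wpM2l.
    - have TA : B2 * Delta k <= T.
        apply: (hl_mono (ltW h1) a21); rewrite -hsm //.
      have i1 : ks * (T * Delta k ^+ 2) <= mdec k.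
        apply: le_trans md; apply: ler_wpM2l => //; exact: ltW.
      have i2 : 2 * kmf * Delta k <= ks * (1 - etaS) * T.
        rewrite -hB2; have := ler_wpM2l (ltW kS0) TA; clear; lra.
      have := ler_wpM2r (sqr_ge0 (Delta k)) i2.
      move: (ler_wpM2l hS1' i1).
      rewrite exprSr; clear; lra.
  have dpos : 0 < mdec k.
    have : 0 < 2 * kmf * Delta k ^+ 3 by rewrite !mulr_gt0 // exprn_gt0.
    move=> X; apply: (hl_pos X key); clear -hS1; lra.
  apply/andP; split; last by rewrite smE; exact: (hl_mono (ltW h1) a12 smA1).
  rewrite /rho ler_pdivlMr //.
  move: q1 q2; rewrite !ler_norml /mdec => /andP[q1 q1'] /andP[q2 q2'].
  rewrite /mdec in key; clear -key q1 q1' q2 q2'; lra.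
set eps' := eps / (1 + ksig * mu_c^-1).
set mn := Num.min Dm (Dm ^+ 2).
set delta := etaU * ks * (eps' * mn).
have eps'0 : 0 < eps' by rewrite divr_gt0 //; clear -ksm; lra.
have mn0 : 0 < mn by have [_ [_ m3]] := minP Dm (Dm ^+ 2); rewrite /mn; case: m3 => -> //; rewrite exprn_gt0.
have delta0 : 0 < delta by apply: mulr_gt0; apply: mulr_gt0.
have DmkH : Dm * kH <= eps'.
  rewrite /eps' ler_pdivlMr; last by clear -ksm; lra.
  by rewrite (_ : Dm * kH * (1 + ksig * mu_c^-1) = Dm * C4) // /C4 mulrA mulrAC.
have S3 k : (k < K)%N -> Dm <= Delta k -> etaU <= rho k -> mu_c * Delta k <= sm k ->
    delta <= f (x k) - f (x k + s k).
  move=> hk hDk hr hsm.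
  have [h1 h2] := Dpos k.
  have sg := sig_le k; have e := hsig k hk.
  have smpos : eps' <= sm k.
    rewrite /eps' ler_pdivrMr; last by clear -ksm; lra.
    have : ksig * Delta k <= ksig * mu_c^-1 * sm k.
      rewrite -mulrA; apply: ler_wpM2l; first by clear -ksig0; lra.
      by rewrite ler_pdivlMl.
    clear -sg e; move: sg; move: (sm k) (ksig * mu_c^-1) => S q; lra.
  have md := model_dec k.
  set G := enorm (g k) in md.
  set T := tau_of (H k) in md.
  set P := opnorm (H k) in md.
  have smE : sm k = Num.max G T by [].
  rewrite smE in smpos hsm.
  have P0 : 0 <= P := @op_ge0 _ _ _.
  have P1 : P + 1 <= kH by have := hHb k; rewrite -/P; clear; lra.
  have [s1 [s2 s3]] := maxP G T.
  have G0 : 0 <= G := @enorm_ge0 _ _ _.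
  have T0 : 0 <= T := @tau_ge0 _ _ _.
  have [M1 [M2 _]] := maxP (G * Num.min (Delta k) (G / (P + 1))) (T * Delta k ^+ 2).
  have [u1 [u2 _]] := minP Dm (Dm ^+ 2); rewrite -/mn in u1 u2.
  have key : eps' * mn <= Num.max (G * Num.min (Delta k) (G / (P + 1))) (T * Delta k ^+ 2).
    case: s3 => hs3; rewrite hs3 in smpos.
    - apply: le_trans M1.
      have GD : Dm <= G / (P + 1).
        rewrite ler_pdivlMr; last by clear -P0; lra.
        apply: le_trans smpos; apply: le_trans DmkH; apply: ler_wpM2l => //; exact: ltW.
      have mnD : mn <= Num.min (Delta k) (G / (P + 1)).
        have [_ [_ n3]] := minP (Delta k) (G / (P + 1)).
        by case: n3 => ->; [exact: (le_trans u1 hDk) | exact: (le_trans u1 GD)].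
      apply: ler_pM => //; exact: ltW.
    - apply: le_trans M2; apply: ler_pM; [exact: ltW|exact: ltW|by []|].
      apply: (le_trans u2); rewrite ler_pXn2r // nnegrE; exact: ltW.
  have dp : 0 < mdec k.
    apply: lt_le_trans md; apply: mulr_gt0 => //; apply: lt_le_trans key.
    exact: mulr_gt0.
  have : etaU * mdec k <= f (x k) - f (x k + s k) by rewrite -ler_pdivlMr.
  apply: le_trans; rewrite /delta -mulrA; apply: ler_wpM2l; first exact: ltW.
  apply: le_trans md; apply: ler_wpM2l => //; exact: ltW.
set Lg := ln gdec^-1.
have Lg0 : 0 < Lg by rewrite /Lg ln_gt0 // invf_gt1.
have lgd : ln gdec = - Lg by rewrite /Lg lnV ?opprK // posrE.
have lgi : 0 < ln ginc by rewrite ln_gt0.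
have LL0 : 0 <= Lg + ln ginc by clear -Lg0 lgi; lra.
have inv : forall k, (k <= K)%N -> Dm <= Delta k /\
    k%:R * (Lg * delta) <= (ln (Delta 0%N) - ln (Delta k)) * delta
                          + (Lg + ln ginc) * (f (x 0%N) - f (x k)).
  elim=> [|k IH] hk.
    by split => //; rewrite !subrr mulr0 addr0 !mul0r.
  have [Dk Ik] := IH (ltnW hk).
  have [st1 st2 st3] := step k.
  have [h1 h2] := Dpos k.
  have [h1' h2'] := Dpos k.+1.
  split.
    case: (lerP (Delta k * gdec) Dm) => hc.
      rewrite (st1 (S2 k hk hc)) le_min; apply/andP; split; last exact: le_trans Dk h2.
      apply: (le_trans Dk); rewrite ler_peMl //; exact: ltW.
    by apply: le_trans st2; rewrite mulrC ltW.
  have -> : (k.+1)%:R = k%:R + 1 :> R by rewrite -addn1 natrD.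
  case: st3 => [[ex [er [es ed]]] | [ex ed]].
    have hd := S3 k hk Dk er es.
    have lnle : ln (Delta k.+1) <= ln ginc + ln (Delta k).
      rewrite -lnM ?posrE ?(lt_trans _ hginc) // ler_ln ?posrE //.
      by rewrite mulr_gt0 // (lt_trans _ hginc).
    have p1 := ler_wpM2r (ltW delta0) lnle.
    have p2 := ler_wpM2l LL0 hd.
    rewrite ex; clear -Ik p1 p2; lra.
  rewrite ex ed lnM ?posrE // lgd.
  clear -Ik; lra.
have [DK IK] := inv K (leqnn K).
have emn : Num.min (eps * Dm) (eps * Dm ^+ 2) = eps * mn.
  by rewrite /mn !minEle ler_pM2l //; case: ifP.
rewrite emn.
have mu0 : mu_c != 0 by rewrite gt_eqF.
have q0 : 1 + ksig * mu_c^-1 != 0 by rewrite gt_eqF //; clear -ksm; lra.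
have eq : (ln (Delta 0%N / Dm) / Lg + (1 + ln ginc / Lg) *
     ((1 + ksig * mu_c^-1) * (f (x 0%N) - f_low) / (etaU * ks * (eps * mn)))) * (Lg * delta)
   = (ln (Delta 0%N) - ln Dm) * delta + (Lg + ln ginc) * (f (x 0%N) - f_low).
  rewrite lnM ?posrE ?invr_gt0 // lnV ?posrE //.
  rewrite /delta /eps'.
  field.
  have mk : mu_c + ksig != 0 by rewrite gt_eqF // addr_gt0.
  by rewrite mu0 mk !gt_eqF.
apply: (hl_scale (mulr_gt0 Lg0 delta0)); rewrite eq.
apply: le_trans IK _.
have l1 : ln Dm <= ln (Delta K) by rewrite ler_ln ?posrE // (lt_le_trans Dm0 DK).
have p1 := ler_wpM2r (ltW delta0) l1.
have l2 := hlow (x K).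
have p2 := ler_wpM2l LL0 l2.
clear -p1 p2; lra.
Qed.
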